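(* Let $t>0$ and $\gamma\ge 9$, and let $$r_2(\gamma)=\frac{\gamma-1-\sqrt{(\gamma-1)(\gamma-9)}}{4}.$$ Consider the infinite linear program: minimize $\phi$ over real $\phi$ and sequences $(x_i)_{i\ge1}$ with $x_i\ge0$ for all $i$, subject to $$\sum_{i=1}^{n}2x_i+(1-\gamma)x_{n-1}+nt\le\phi\qquad\text{for all } n\ge1,$$ with the convention $x_0=0$ (so the constraints read $2x_1+t\le\phi$, $(3-\gamma)x_1+2x_2+2t\le\phi$, $2x_1+(3-\gamma)x_2+2x_3+3t\le\phi$, etc.). Then the optimal value is $\phi(\gamma)=r_2(\gamma)\,t$, and it is attained by the strategy $$x_i=\tfrac12\big(r_2(\gamma)^i-1\big)t,\qquad i\ge1.$$ Equivalently, in the search-with-turn-cost model described in the context, this strategy has worst-case total cost $\gamma D+r_2(\gamma)t$, and no strategy guarantees worst-case total cost $\gamma D+\phi$ with $\phi<r_2(\gamma)t$.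
   Context: Model of searching on a line with turn cost and no lower bound on the target distance: the searcher alternates sides, at step $i$ walking distance $x_i\ge0$ from the origin on one side and back (the side alternating with $i$); the cost is the total distance walked plus $t$ for each excursion (turn). The target is at unknown distance $D>0$. A strategy guarantees total cost $\gamma D+\phi$ if for every target position the cost of finding it is at most $\gamma D+\phi$; the $n$-th linear constraint above expresses this for a target just beyond $x_{n-1}$ on the side visited at steps $n-1$ and $n+1$. *)

(* Defs.v *)
From Stdlib Require Import Reals Lra Lia.
Open Scope R_scope.

Definition r2 (gamma : R) : R :=
  (gamma - 1 - sqrt ((gamma - 1) * (gamma - 9))) / 4.

(* A sequence x_1, x_2, ... is a function x : nat -> R whose value at 0 is
   ignored; x_0 is taken to be 0 by convention. *)
Definition xat (x : nat -> R) (k : nat) : R :=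
  match k with O => 0 | _ => x k end.

Definition lp_constraint (t gamma phi : R) (x : nat -> R) (n : nat) : Prop :=
  sum_f_R0 (fun j => 2 * x (S j)) (n - 1) + (1 - gamma) * xat x (n - 1)
    + INR n * t <= phi.

Definition lp_feasible (t gamma phi : R) (x : nat -> R) : Prop :=
  (forall i : nat, (1 <= i)%nat -> 0 <= x i) /\
  (forall n : nat, (1 <= n)%nat -> lp_constraint t gamma phi x n).

(* Main.v *)
Require Import Defs.
From Stdlib Require Import ZArith Reals Lra Lia.
Open Scope R_scope.

Fixpoint TT (x : nat -> R) (k : nat) : R :=
  match k with O => 0 | S k' => TT x k' + x (S k') end.

Lemma sum_TT x n : sum_f_R0 (fun j => 2 * x (S j)) n = 2 * TT x (S n).
Proof.
  induction n as [|n IH]; simpl.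
  - ring.
  - simpl in IH. rewrite IH. ring.
Qed.

Lemma xat_TT x m : xat x m = TT x m - TT x (pred m).
Proof. destruct m; simpl; ring. Qed.

Lemma arch (r:R): 0 <= r -> exists n:nat, r < INR n.
Proof.
  intro Hr. destruct (archimed r) as [H _]. exists (Z.to_nat (up r)).
  rewrite INR_IZR_INZ, Z2Nat.id; [lra|]. apply le_IZR; lra.
Qed.

Lemma roots gamma : 9 <= gamma -> exists q,
  2*(r2 gamma+q) = gamma-1 /\ r2 gamma*q = r2 gamma + q /\ 2 <= q /\ r2 gamma <= q /\ 1 < r2 gamma.
Proof.
  intro Hg. set (s := sqrt ((gamma - 1) * (gamma - 9))).
  assert (Hs0 : 0 <= s) by apply sqrt_pos.
  assert (Hss : s * s = (gamma - 1) * (gamma - 9)) by (apply sqrt_sqrt; nra).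
  exists ((gamma - 1 + s)/4). unfold r2; fold s.
  assert (E : (gamma - 1 - s) / 4 * ((gamma - 1 + s) / 4) = (gamma - 1 - s) / 4 + (gamma - 1 + s) / 4) by nra.
  repeat split; try lra.
  assert (Hs2 : s*s <= (gamma-1)*(gamma-1) - 16*(gamma-1) + 8*(gamma-1)) by nra.
  nra.
Qed.

Lemma lp_con_S t gamma phi x m :
  lp_constraint t gamma phi x (S m) <->
  2 * TT x (S m) + (1 - gamma) * (TT x m - TT x (pred m)) + (INR m + 1) * t <= phi.
Proof.
  unfold lp_constraint. replace (S m - 1)%nat with m by lia.
  rewrite sum_TT, xat_TT, S_INR. replace (S m) with (S m) by reflexivity. tauto.
Qed.

Theorem theorem3 (t gamma : R) (ht : 0 < t) (hgamma : 9 <= gamma) :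
  lp_feasible t gamma (r2 gamma * t)
    (fun i => (r2 gamma ^ i - 1) * t / 2) /\
  (forall (phi : R) (x : nat -> R),
     lp_feasible t gamma phi x -> r2 gamma * t <= phi).
Proof.
  destruct (roots gamma hgamma) as [q [H1 [H2 [H3 [H4 H5]]]]].
  set (p := r2 gamma) in *.
  assert (Hpq1 : (p-1)*(q-1) = 1) by nra.
  split.
  - split.
    + intros i _. assert (1 <= p ^ i) by (apply pow_R1_Rle; lra). nra.
    + intros n Hn. destruct n as [|m]; [lia|]. apply lp_con_S.
      set (x := fun i => (p ^ i - 1) * t / 2).
      assert (HT : forall k, (p-1) * (2 * TT x k) = t * (p ^ (S k) - p - INR k * (p-1))).
      { induction k as [|k IH]; simpl TT.
        - simpl. ring.
        - replace (x (S k)) with ((p ^ S k - 1) * t / 2) by reflexivity.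
          rewrite S_INR.
          transitivity ((p-1)*(2*TT x k) + (p-1)*(p^S k - 1)*t); [field|].
          rewrite IH. simpl. ring. }
      assert (Hx : TT x m - TT x (pred m) = (p ^ m - 1) * t / 2).
      { rewrite <- xat_TT. destruct m; simpl; [field| reflexivity]. }
      rewrite Hx.
      apply Rmult_le_reg_l with (p - 1); [lra|].
      right.
      rewrite Rmult_plus_distr_l, Rmult_plus_distr_l, HT.
      assert (Hg : 1 - gamma = - (2*(p+q))) by lra.
      rewrite Hg, S_INR. cbn [pow].
      assert (Hpp : (p-1)*(2*(p+q)) = 2*p*p).
      { assert (q = p*q - p) by lra. nra. }
      replace ((p - 1) * (- (2 * (p + q)) * ((p ^ m - 1) * t / 2)))
        with (- ((p-1)*(2*(p+q))) * ((p ^ m - 1) * t / 2)) by field.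
      rewrite Hpp. field.
  - intros phi x [Hx Hc].
    destruct (Rle_or_lt (p*t) phi) as [Hle|Hlt]; [exact Hle|exfalso].
    set (T := TT x).
    assert (C : forall m, 2*T (S m) - 2*(p+q)*T m + 2*(p*q)*T (pred m) <= phi - (INR m + 1) * t).
    { intro m. assert (Hm := proj1 (lp_con_S t gamma phi x m) (Hc (S m) ltac:(lia))).
      fold T in Hm. assert (1 - gamma = -(2*(p+q))) by lra. rewrite H in Hm.
      rewrite H2. lra. }
    assert (Tnn : forall m, 0 <= T m).
    { induction m as [|m IH]; unfold T in *; simpl; [lra|].
      assert (0 <= x (S m)) by (apply Hx; lia). lra. }
    set (V := fun m => T m - p * T (pred m)).
    assert (Vstep : forall m, V (S m) <= q * V m + (phi - (INR m + 1) * t)/2).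
    { intro m. unfold V. simpl pred. specialize (C m). lra. }
    set (al := (p*t - phi)*(p-1)/2).
    set (be := (p-1)*t/2).
    assert (0 < (p*t-phi)*(p-1)) by (apply Rmult_lt_0_compat; lra).
    assert (Hal : 0 < al) by (unfold al; lra).
    assert (S1 : forall m, V m <= al * (1 - q ^ m) + be * INR m).
    { induction m as [|m IH].
      - unfold V, T. simpl. nra.
      - eapply Rle_trans; [apply Vstep|].
        rewrite S_INR.
        assert (q * V m <= q * (al * (1 - q ^ m) + be * INR m)) by (apply Rmult_le_compat_l; lra).
        assert (E : q * (al * (1 - q ^ m) + be * INR m) + (phi - (INR m + 1) * t) / 2
                    = al * (1 - q ^ S m) + be * (INR m + 1)).
        { assert (Z : ((p-1)*(q-1)-1)*(p*t-phi+t*INR m)/2 = 0) by (rewrite Hpq1; field).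
          rewrite <- (Rplus_0_r (al * (1 - q ^ S m) + be * (INR m + 1))), <- Z.
          unfold al, be. cbn [pow]. field. }
        lra. }
    set (K := (q-1)*p*t/2 + (p*t - phi)/2).
    assert (0 < (q-1)*p*t) by (apply Rmult_lt_0_compat; [apply Rmult_lt_0_compat|]; lra).
    assert (HK : 0 < K) by (unfold K; lra).
    set (B := fun m => p ^ m * (K - al * INR m) - K - t/2 * INR m).
    assert (S2 : forall m, T m <= B m).
    { induction m as [|m IH].
      - unfold B, T. simpl. lra.
      - assert (HV := S1 (S m)). unfold V in HV. simpl pred in HV.
        assert (Hpow : p ^ S m <= q ^ S m) by (apply pow_incr; lra).
        assert (p * T m <= p * B m) by (apply Rmult_le_compat_l; lra).
        assert (E : p * B m + al * (1 - p ^ S m) + be * INR (S m) = B (S m)).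
        { assert (Z : ((p-1)*(q-1)-1)*p*t/2 = 0) by (rewrite Hpq1; field).
          rewrite <- (Rplus_0_r (p * B m + al * (1 - p ^ S m) + be * INR (S m))), <- Z.
          unfold B, be, K, al. rewrite S_INR. cbn [pow]. field. }
        assert (al * q ^ S m >= al * p ^ S m) by (apply Rle_ge, Rmult_le_compat_l; lra).
        lra. }
    destruct (arch (K / al)) as [n Hn].
    { apply Rlt_le, Rdiv_lt_0_compat; lra. }
    assert (HnK : K < al * INR n).
    { apply Rmult_lt_compat_l with (r := al) in Hn; [|lra].
      field_simplify in Hn; lra. }
    assert (Hpn : 0 < p ^ n) by (apply pow_lt; lra).
    assert (0 <= INR n) by apply pos_INR.
    specialize (S2 n). specialize (Tnn n). unfold B in S2. nra.
Qed.
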